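(* (Convolution lemma.) Let $x_0,\dots,x_q$ be complex numbers (repetitions allowed), $q\ge1$, let $0\le j\le q-1$, and let $\beta>0$. Then $$\int_0^\beta e^{-\tau[x_{j+1},\ldots,x_q]}\,e^{-(\beta-\tau)[x_0,\ldots,x_j]}\,\mathrm{d}\tau=-e^{-\beta[x_0,\ldots,x_q]}.$$
   Context: For $t\in\mathbb{R}$ and numbers $y_0,\dots,y_p$ (repetitions allowed), $e^{t[y_0,\ldots,y_p]}$ denotes the divided difference of $f(x)=e^{tx}$ at $y_0,\dots,y_p$, defined by $f[y_0,\ldots,y_p]=\frac{1}{2\pi i}\oint_\Gamma\frac{f(x)}{\prod_{i=0}^p(x-y_i)}\,\mathrm{d}x$ with $\Gamma$ a positively oriented contour enclosing all $y_i$. Thus $e^{-\tau[\cdots]}$ is the divided difference of $x\mapsto e^{-\tau x}$. *)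

(* Defs.v *)
From Stdlib Require Export Reals List.
From Coquelicot Require Export Coquelicot.
Open Scope R_scope.

Definition cexp (z : C) : C :=
  (exp (fst z) * cos (snd z), exp (fst z) * sin (snd z)).

Definition Cprod (l : list C) : C := fold_right Cmult (RtoC 1) l.

Definition dd_radius (ys : list C) : R :=
  1 + fold_right (fun y acc => Cmod y + acc) 0 ys.

Definition circ (r th : R) : C := (r * cos th, r * sin th).

(* Divided difference of f at the nodes ys (repetitions allowed), defined as
   (1/(2 pi i)) \oint_Gamma f(x) / prod_i (x - y_i) dx, with Gamma the positively
   oriented circle |x| = dd_radius ys, which encloses all the nodes.
   Parametrising x = r e^{i th}, dx = i x dth, this is
   (1/(2 pi)) \int_0^{2 pi} f(x) x / prod_i (x - y_i) dth. *)
Definition divdiff (f : C -> C) (ys : list C) : C :=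
  let r := dd_radius ys in
  Cmult (RtoC (/ (2 * PI)))
    (RInt (V := C_R_CompleteNormedModule)
       (fun th => let x := circ r th in
          Cmult (Cmult (f x) x) (Cinv (Cprod (map (fun y => Cminus x y) ys))))
       0 (2 * PI)).

(* e^{t[y_0,...,y_p]} : divided difference of x |-> e^{t x} *)
Definition expdd (t : R) (ys : list C) : C :=
  divdiff (fun x => cexp (Cmult (RtoC t) x)) ys.

(* the nodes x_a, ..., x_b (inclusive), for a <= b *)
Definition nodes (x : nat -> C) (a b : nat) : list C :=
  map x (seq a (S b - a)).

(* Main.v *)
Require Import Defs.
From Stdlib Require Import Lra Lia Psatz Factorial.

Close Scope C_scope. Open Scope R_scope.
Open Scope R_scope.

Notation CV := C_R_CompleteNormedModule.

Lemma CRInt_pair (f : R -> C) a b (l : C) :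
  is_RInt (fun t => fst (f t)) a b (fst l) ->
  is_RInt (fun t => snd (f t)) a b (snd l) ->
  is_RInt (V := CV) f a b l.
Proof.
  intros H1 H2. destruct l as [l1 l2].
  exact (is_RInt_fct_extend_pair (U:=R_NormedModule) (V:=R_NormedModule) f a b l1 l2 H1 H2).
Qed.

Lemma CRInt_fst (f : R -> C) a b (l : C) :
  is_RInt (V := CV) f a b l -> is_RInt (fun t => fst (f t)) a b (fst l).
Proof.
  intros H. exact (is_RInt_fct_extend_fst (U:=R_NormedModule) (V:=R_NormedModule) f a b l H).
Qed.
Lemma CRInt_snd (f : R -> C) a b (l : C) :
  is_RInt (V := CV) f a b l -> is_RInt (fun t => snd (f t)) a b (snd l).
Proof.
  intros H. exact (is_RInt_fct_extend_snd (U:=R_NormedModule) (V:=R_NormedModule) f a b l H).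
Qed.

Open Scope C_scope.

Lemma CRInt_mult_l (c : C) (f : R -> C) a b (l : C) :
  is_RInt (V := CV) f a b l -> is_RInt (V := CV) (fun t => c * f t) a b (c * l).
Proof.
  intros H. apply CRInt_pair; simpl.
  - apply (is_RInt_minus (V:=R_NormedModule) (fun t => (fst c * fst (f t))%R) (fun t => (snd c * snd (f t))%R)).
    + apply (is_RInt_scal (V:=R_NormedModule) (fun t => fst (f t))). apply CRInt_fst; auto.
    + apply (is_RInt_scal (V:=R_NormedModule) (fun t => snd (f t))). apply CRInt_snd; auto.
  - apply (is_RInt_plus (V:=R_NormedModule) (fun t => (fst c * snd (f t))%R) (fun t => (snd c * fst (f t))%R)).
    + apply (is_RInt_scal (V:=R_NormedModule) (fun t => snd (f t))). apply CRInt_snd; auto.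
    + apply (is_RInt_scal (V:=R_NormedModule) (fun t => fst (f t))). apply CRInt_fst; auto.
Qed.

Lemma CRInt_plus (f g : R -> C) a b (l m : C) :
  is_RInt (V := CV) f a b l -> is_RInt (V := CV) g a b m ->
  is_RInt (V := CV) (fun t => f t + g t) a b (l + m).
Proof.
  intros H1 H2. exact (is_RInt_plus (V:=CV) f g a b l m H1 H2).
Qed.

Lemma CRInt_minus (f g : R -> C) a b (l m : C) :
  is_RInt (V := CV) f a b l -> is_RInt (V := CV) g a b m ->
  is_RInt (V := CV) (fun t => f t - g t) a b (l - m).
Proof.
  intros H1 H2. exact (is_RInt_minus (V:=CV) f g a b l m H1 H2).
Qed.

Lemma CRInt_ext (f g : R -> C) a b (l : C) :
  (forall t, f t = g t) -> is_RInt (V := CV) f a b l -> is_RInt (V := CV) g a b l.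
Proof.
  intros E H. apply (is_RInt_ext (V:=CV) f); auto.
Qed.

Lemma CRInt_eqv (f : R -> C) a b (l m : C) :
  l = m -> is_RInt (V := CV) f a b l -> is_RInt (V := CV) f a b m.
Proof. intros ->; auto. Qed.


Definition CC (f : R -> C) := forall t : R,
  continuous (fun s => fst (f s)) t /\ continuous (fun s => snd (f s)) t.

Lemma CC_ex_RInt f a b : CC f -> ex_RInt (V := CV) f a b.
Proof.
  intros H.
  apply (ex_RInt_fct_extend_pair (U:=R_NormedModule) (V:=R_NormedModule) f a b);
  apply (ex_RInt_continuous (V:=R_CompleteNormedModule)); intros; apply H.
Qed.

Lemma CC_const c : CC (fun _ => c).
Proof. intros t; split; apply continuous_const. Qed.

Lemma CC_plus f g : CC f -> CC g -> CC (fun t => f t + g t).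
Proof.
  intros Hf Hg t; destruct (Hf t), (Hg t); simpl; split;
  apply (continuous_plus (V:=R_NormedModule)); auto.
Qed.

Lemma CC_opp f : CC f -> CC (fun t => - f t).
Proof.
  intros Hf t; destruct (Hf t); simpl; split;
  apply (continuous_opp (V:=R_NormedModule)); auto.
Qed.

Lemma CC_minus f g : CC f -> CC g -> CC (fun t => f t - g t).
Proof.
  intros Hf Hg. unfold Cminus. apply CC_plus; auto. apply CC_opp; auto.
Qed.

Lemma cont_mult (f g : R -> R) t : continuous f t -> continuous g t -> continuous (fun s => f s * g s)%R t.
Proof. intros; apply (continuous_mult (K:=R_AbsRing)); auto. Qed.
Lemma cont_minus (f g : R -> R) t : continuous f t -> continuous g t -> continuous (fun s => f s - g s)%R t.
Proof. intros; apply (continuous_minus (V:=R_NormedModule)); auto. Qed.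
Lemma cont_plus (f g : R -> R) t : continuous f t -> continuous g t -> continuous (fun s => f s + g s)%R t.
Proof. intros; apply (continuous_plus (V:=R_NormedModule)); auto. Qed.

Lemma CC_mult f g : CC f -> CC g -> CC (fun t => f t * g t).
Proof.
  intros Hf Hg t; destruct (Hf t), (Hg t); simpl; split.
  - apply cont_minus; apply cont_mult; auto.
  - apply cont_plus; apply cont_mult; auto.
Qed.

Lemma CC_inv f : CC f -> (forall t, f t <> 0) -> CC (fun t => / f t).
Proof.
  intros Hf Hn t; destruct (Hf t) as [H1 H2]; simpl.
  assert (D : (fst (f t) * fst (f t) + snd (f t) * snd (f t))%R <> 0%R).
  { intro E. apply (Hn t). destruct (f t) as [u v]; simpl in E.
    assert (u = 0%R /\ v = 0%R) as [-> ->] by nra. reflexivity. }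
  assert (Hd : continuous (fun s => fst (f s) * fst (f s) + snd (f s) * snd (f s))%R t).
  { apply cont_plus; apply cont_mult; auto. }
  split.
  - eapply continuous_ext. { intros s. unfold Rdiv. reflexivity. }
    apply cont_mult; auto. apply continuous_Rinv_comp; auto.
    eapply continuous_ext; [ | exact Hd]. intros s; simpl; ring.
    intro E; apply D; rewrite <- E; ring.
  - apply cont_mult. apply (continuous_opp (V:=R_NormedModule)); auto.
    apply continuous_Rinv_comp; auto.
    eapply continuous_ext; [ | exact Hd]. intros s; simpl; ring.
    intro E; apply D; rewrite <- E; ring.
Qed.

Lemma cont_of_ex_derive (f : R -> R) t : ex_derive f t -> continuous f t.
Proof. intros H; exact (ex_derive_continuous (K:=R_AbsRing) (V:=R_NormedModule) f t H). Qed.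

Lemma CC_circ r : CC (fun t => circ r t).
Proof.
  intros t; unfold circ; simpl; split; apply cont_of_ex_derive; auto_derive; auto.
Qed.

Lemma CC_pow f n : CC f -> CC (fun t => f t ^ n).
Proof.
  intros Hf; induction n; simpl. apply CC_const. apply CC_mult; auto.
Qed.

Lemma CC_cexp f : CC f -> CC (fun t => cexp (f t)).
Proof.
  intros Hf t; destruct (Hf t) as [H1 H2]; unfold cexp; simpl; split;
  apply cont_mult.
  all: try (apply (continuous_comp (fun s => fst (f s)) exp); auto; apply cont_of_ex_derive; auto_derive; auto).
  apply (continuous_comp (fun s => snd (f s)) cos); auto; apply cont_of_ex_derive; auto_derive; auto.
  apply (continuous_comp (fun s => snd (f s)) sin); auto; apply cont_of_ex_derive; auto_derive; auto.
Qed.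

Definition Pr (Y : list C) (x : C) : C := Cprod (map (fun y => x - y) Y).

Lemma CC_Pr Y f : CC f -> CC (fun t => Pr Y (f t)).
Proof.
  intros Hf; induction Y as [|y Y IH]; unfold Pr; simpl.
  apply CC_const. apply CC_mult; auto. apply CC_minus; auto. apply CC_const.
Qed.

Lemma Ceq (x y : C) : fst x = fst y -> snd x = snd y -> x = y.
Proof. destruct x, y; simpl; intros -> ->; reflexivity. Qed.

Lemma circ_mult r1 r2 t1 t2 : circ r1 t1 * circ r2 t2 = circ (r1 * r2) (t1 + t2).
Proof. unfold circ; apply Ceq; simpl; rewrite ?cos_plus, ?sin_plus; ring. Qed.

Lemma circ_pow r t n : circ r t ^ n = circ (r ^ n) (INR n * t).
Proof.
  induction n; simpl Cpow.
  - unfold circ; apply Ceq; simpl; rewrite ?Rmult_0_l, ?cos_0, ?sin_0; ring.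
  - rewrite IHn, circ_mult. rewrite S_INR. f_equal; simpl; ring.
Qed.

Lemma Cmod_circ r t : 0 <= r -> Cmod (circ r t) = r.
Proof.
  intros Hr; unfold Cmod, circ. cbn [fst snd].
  replace ((r * cos t) ^ 2 + (r * sin t) ^ 2)%R with (r ^ 2)%R.
  apply sqrt_pow2; auto.
  assert (H := sin2_cos2 t); unfold Rsqr in H.
  replace (r ^ 2)%R with (r ^ 2 * 1)%R by ring. rewrite <- H; ring.
Qed.

Lemma circ_neq0 r t : 0 < r -> circ r t <> 0.
Proof.
  intros Hr E. assert (H := Cmod_circ r t (Rlt_le _ _ Hr)). rewrite E, Cmod_0 in H. lra.
Qed.

Lemma circ_inv r t : 0 < r -> / circ r t = circ (/ r) (- t).
Proof.
  intros Hr.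
  assert (circ r t * circ (/ r) (- t) = 1) as E.
  { rewrite circ_mult. replace (t + - t)%R with 0%R by ring. rewrite Rinv_r by lra.
    unfold circ; apply Ceq; simpl; rewrite ?cos_0, ?sin_0; ring. }
  rewrite <- (Cmult_1_r (/ circ r t)), <- E. field. apply circ_neq0; auto.
Qed.

Close Scope C_scope.
Lemma is_RInt_val {V : NormedModule R_AbsRing} (f : R -> V) a b l m : is_RInt f a b l -> l = m -> is_RInt f a b m.
Proof. intros H ->; auto. Qed.

Lemma RInt_cos_n (n : nat) (c : R) : (1 <= n)%nat ->
  is_RInt (fun t => c * cos (INR n * t))%R 0 (2 * PI) 0%R.
Proof.
  intros Hn. assert (Hn' : INR n <> 0%R) by (apply not_0_INR; lia).
  eapply is_RInt_val.
  apply (is_RInt_derive (V:=R_CompleteNormedModule) (fun t => c * sin (INR n * t) / INR n)%R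
      (fun t => c * cos (INR n * t))%R 0 (2 * PI)).
  - intros; auto_derive; auto. field; auto.
  - intros; apply cont_of_ex_derive; auto_derive; auto.
  - rewrite Rmult_0_r, sin_0. replace (INR n * (2 * PI))%R with (0 + 2 * INR n * PI)%R by ring.
    rewrite sin_period, sin_0. unfold minus, plus, opp; simpl. field; auto.
Qed.

Lemma RInt_sin_n (n : nat) (c : R) : (1 <= n)%nat ->
  is_RInt (fun t => c * sin (INR n * t))%R 0 (2 * PI) 0%R.
Proof.
  intros Hn. assert (Hn' : INR n <> 0%R) by (apply not_0_INR; lia).
  eapply is_RInt_val.
  apply (is_RInt_derive (V:=R_CompleteNormedModule) (fun t => - c * cos (INR n * t) / INR n)%R
      (fun t => c * sin (INR n * t))%R 0 (2 * PI)).
  - intros; auto_derive; auto. field; auto.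
  - intros; apply cont_of_ex_derive; auto_derive; auto.
  - rewrite Rmult_0_r, cos_0. replace (INR n * (2 * PI))%R with (0 + 2 * INR n * PI)%R by ring.
    rewrite cos_period, cos_0. unfold minus, plus, opp; simpl. field; auto.
Qed.

Lemma RInt_circ_n (n : nat) (rho : R) : (1 <= n)%nat ->
  is_RInt (V := CV) (fun t => circ rho (INR n * t)) 0 (2 * PI) (RtoC 0).
Proof.
  intros Hn. apply CRInt_pair; simpl; unfold circ; simpl.
  apply RInt_cos_n; auto. apply RInt_sin_n; auto.
Qed.

Lemma RInt_circ_mn (n : nat) (rho : R) : (1 <= n)%nat ->
  is_RInt (V := CV) (fun t => circ rho (- (INR n * t))) 0 (2 * PI) (RtoC 0).
Proof.
  intros Hn. apply CRInt_pair; simpl; unfold circ; simpl.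
  eapply is_RInt_ext. 2: apply RInt_cos_n; eauto. intros; simpl; rewrite cos_neg; auto.
  eapply is_RInt_ext. 2: apply (RInt_sin_n n (- rho)); eauto. intros; simpl; rewrite sin_neg; ring.
Qed.
Open Scope C_scope.

Lemma xw_int r a b : 0 < r ->
  is_RInt (V := CV) (fun t => circ r t ^ a * (/ circ r t) ^ b) 0 (2 * PI)
    (if Nat.eqb a b then RtoC (2 * PI) else RtoC 0).
Proof.
  intros Hr.
  assert (E : forall t, circ r t ^ a * (/ circ r t) ^ b =
                 circ (r ^ a * (/ r) ^ b) (INR a * t + INR b * - t)).
  { intros t. rewrite circ_inv, !circ_pow, circ_mult by auto. reflexivity. }
  destruct (Nat.eqb_spec a b) as [<-|Hab].
  - apply (CRInt_ext (fun _ => RtoC 1)).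
    { intros t. rewrite E. rewrite <- Rpow_mult_distr, Rinv_r, pow1 by lra.
      unfold circ; apply Ceq; simpl; replace (INR a * t + INR a * - t)%R with 0%R by ring;
      rewrite ?cos_0, ?sin_0; ring. }
    apply CRInt_pair; simpl.
    + eapply is_RInt_val. apply (is_RInt_const (V:=R_NormedModule)). 
      unfold scal; simpl; unfold mult; simpl; ring.
    + eapply is_RInt_val. apply (is_RInt_const (V:=R_NormedModule)). 
      unfold scal; simpl; unfold mult; simpl; ring.
  - destruct (Nat.lt_ge_cases b a) as [H|H].
    + apply (CRInt_ext (fun t => circ (r ^ a * (/ r) ^ b) (INR (a - b) * t))).
      { intros t. rewrite E. f_equal. rewrite minus_INR by lia. ring. }
      apply RInt_circ_n. lia.
    + apply (CRInt_ext (fun t => circ (r ^ a * (/ r) ^ b) (- (INR (b - a) * t)))).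
      { intros t. rewrite E. f_equal. rewrite minus_INR by lia. ring. }
      apply RInt_circ_mn. lia.
Qed.

Close Scope C_scope. Open Scope R_scope.
Open Scope C_scope.

Lemma normCV l : @norm R_AbsRing CV l = Cmod l.
Proof. unfold norm; simpl. unfold prod_norm; simpl. unfold Cmod. f_equal.
  change (norm (fst l)) with (Rabs (fst l)). change (norm (snd l)) with (Rabs (snd l)).
  rewrite !Rmult_1_r, <- !Rabs_mult, !Rabs_right; try ring;
  apply Rle_ge; apply Rle_0_sqr. Qed.

Lemma CRInt_bound (f : R -> C) a b l (B : R) : (a <= b)%R ->
  (forall t, (a <= t <= b)%R -> (Cmod (f t) <= B)%R) ->
  is_RInt (V := CV) f a b l -> (Cmod l <= (b - a) * B)%R.
Proof.
  intros Hab HB H.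
  assert (N : (norm l <= (b - a) * B)%R).
  { eapply (norm_RInt_le (V:=CV) f (fun _ => B)); eauto.
    - intros t Ht. rewrite normCV. apply HB; auto.
    - eapply is_RInt_val. apply (is_RInt_const (V:=R_NormedModule)). reflexivity. }
  rewrite normCV in N. auto.
Qed.

Fixpoint csum (f : nat -> C) (n : nat) : C :=
  match n with O => RtoC 0 | S n => csum f n + f n end.

Lemma csum_ext (f g : nat -> C) n : (forall k, (k < n)%nat -> f k = g k) -> csum f n = csum g n.
Proof.
  induction n; simpl; intros H; auto. rewrite IHn, H; auto.
Qed.

Lemma csum_trunc (f : nat -> C) d n : (d <= n)%nat -> (forall k, (d <= k < n)%nat -> f k = 0) ->
  csum f n = csum f d.
Proof.
  induction n; intros Hd H. replace d with O by lia; auto.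
  destruct (Nat.eq_dec d (S n)) as [->|Hne]; auto.
  simpl. rewrite H by lia. rewrite IHn. ring. lia. intros; apply H; lia.
Qed.

Lemma csum_zero n : csum (fun _ => RtoC 0) n = 0.
Proof. induction n; simpl; auto. rewrite IHn; ring. Qed.

Lemma csum_mult_l c (f : nat -> C) n : csum (fun k => c * f k) n = c * csum f n.
Proof. induction n; simpl. ring. rewrite IHn; ring. Qed.

Lemma csum_plus (f g : nat -> C) n : csum (fun k => f k + g k) n = csum f n + csum g n.
Proof. induction n; simpl. ring. rewrite IHn; ring. Qed.

Lemma CRInt_csum (f : nat -> R -> C) (l : nat -> C) a b N :
  (forall k, is_RInt (V := CV) (f k) a b (l k)) ->
  is_RInt (V := CV) (fun t => csum (fun k => f k t) N) a b (csum l N).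
Proof.
  intros H; induction N; simpl.
  - eapply is_RInt_val. apply (is_RInt_const (V:=CV)).
    apply Ceq; simpl; unfold scal; simpl; unfold mult; simpl; ring.
  - apply CRInt_plus; auto.
Qed.

Fixpoint G (Y : list C) (k : nat) : C :=
  match Y with
  | nil => if Nat.eqb k 0 then RtoC 1 else RtoC 0
  | y :: Y' => csum (fun i => y ^ i * G Y' (k - S i)) k
  end.

Definition Fm (Y : list C) (r : R) (a b : nat) (t : R) : C :=
  circ r t ^ a * (/ circ r t) ^ b * / Pr Y (circ r t).

Definition LB (r : R) (Y : list C) : R := fold_right (fun z acc => (r - Cmod z) * acc)%R 1%R Y.

Definition Inr (r : R) (Y : list C) := forall y, In y Y -> (Cmod y < r)%R.

Lemma Inr_cons r y Y : Inr r (y :: Y) -> (Cmod y < r)%R /\ Inr r Y.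
Proof. intros H; split. apply H; simpl; auto. intros z Hz; apply H; simpl; auto. Qed.

Lemma Pr_lb r t Y : (0 < r)%R -> Inr r Y ->
  (0 < LB r Y)%R /\ (LB r Y <= Cmod (Pr Y (circ r t)))%R.
Proof.
  intros Hr HY; induction Y as [|y Y IH]; unfold Pr, LB in *; simpl.
  - rewrite Cmod_1; lra.
  - destruct (Inr_cons _ _ _ HY) as [Hy HY']. destruct (IH HY') as [IH1 IH2]. rewrite Cmod_mult. split. apply Rmult_lt_0_compat; lra.
    apply Rmult_le_compat; try lra.
    pose proof (Cmod_triangle (circ r t - y) y) as H.
    replace (circ r t - y + y) with (circ r t) in H by ring.
    rewrite Cmod_circ in H by lra. lra.
Qed.

Lemma Pr_neq0 r t Y : (0 < r)%R -> Inr r Y -> Pr Y (circ r t) <> 0.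
Proof.
  intros Hr HY E. destruct (Pr_lb r t Y Hr HY) as [H1 H2]. rewrite E, Cmod_0 in H2. lra.
Qed.

Lemma Fm_bound Y r a b t : (0 < r)%R -> Inr r Y ->
  (Cmod (Fm Y r a b t) <= r ^ a * (/ r) ^ b * / LB r Y)%R.
Proof.
  intros Hr HY. destruct (Pr_lb r t Y Hr HY) as [H1 H2].
  unfold Fm. rewrite !Cmod_mult, !Cmod_pow, !Cmod_inv, Cmod_circ; try lra.
  2: apply Pr_neq0; auto. 2: apply circ_neq0; auto.
  apply Rmult_le_compat_l. apply Rmult_le_pos; apply pow_le; try lra. left; apply Rinv_0_lt_compat; lra.
  apply Rinv_le_contravar; auto.
Qed.

Lemma CC_Fm Y r a b : (0 < r)%R -> Inr r Y -> CC (Fm Y r a b).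
Proof.
  intros Hr HY. unfold Fm. apply CC_mult. apply CC_mult. apply CC_pow, CC_circ.
  apply CC_pow, CC_inv. apply CC_circ. intros; apply circ_neq0; auto.
  apply CC_inv. apply CC_Pr, CC_circ. intros; apply Pr_neq0; auto.
Qed.

Lemma small_zero (z : C) (K q : R) N0 : (0 <= q < 1)%R ->
  (forall N, (N0 <= N)%nat -> (Cmod z <= K * q ^ N)%R) -> z = 0.
Proof.
  intros Hq H. destruct (Ceq_dec z 0) as [->|Hz]; auto. exfalso.
  assert (Hm : (0 < Cmod z)%R). { apply Rnot_le_lt. intro. apply Hz, Cmod_eq_0. pose proof (Cmod_ge_0 z). lra. }
  destruct (Rle_lt_dec K 0) as [HK|HK].
  - specialize (H N0 (le_n _)). assert (0 <= q ^ N0)%R by (apply pow_le; lra). nra.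
  - destruct (pow_lt_1_zero q (ltac:(rewrite Rabs_right; lra)) (Cmod z / K)) as [N1 HN1].
    { apply Rdiv_lt_0_compat; auto. }
    specialize (HN1 (Nat.max N0 N1) ltac:(lia)). specialize (H (Nat.max N0 N1) ltac:(lia)).
    rewrite Rabs_right in HN1 by (apply Rle_ge, pow_le; lra).
    apply (Rmult_lt_compat_l K) in HN1; auto.
    replace (K * (Cmod z / K))%R with (Cmod z) in HN1 by (field; lra). lra.
Qed.

Lemma geom_id (x y : C) N : x <> 0 -> x - y <> 0 ->
  / (x - y) = csum (fun k => y ^ k * (/ x) ^ S k) N + y ^ N * (/ x) ^ N * / (x - y).
Proof.
  intros Hx Hxy. induction N; simpl csum.
  - simpl. ring.
  - rewrite IHN at 1. rewrite <- Cplus_assoc. f_equal. rewrite !Cpow_S. field. split; auto.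
Qed.

Lemma Fm_split y Y r a b N t : (0 < r)%R -> Inr r (y :: Y) ->
  Fm (y :: Y) r a b t =
  csum (fun k => y ^ k * Fm Y r a (b + S k) t) N + y ^ N * Fm (y :: Y) r a (b + N) t.
Proof.
  intros Hr HY. destruct (Inr_cons _ _ _ HY) as [Hy HY'].
  set (x := circ r t).
  assert (Hx : x <> 0) by (apply circ_neq0; auto).
  assert (Hxy : x - y <> 0).
  { pose proof (Pr_neq0 r t (y :: nil) Hr) as H. unfold Pr in H; simpl in H.
    intro E; apply H. intros z [<-|[]]; auto. fold x. rewrite E. ring. }
  assert (HP : Pr Y x <> 0) by (apply Pr_neq0; auto).
  unfold Fm. fold x. unfold Pr at 1 3. simpl map. simpl Cprod. fold (Pr Y x).
  set (c := x ^ a * (/ x) ^ b * / Pr Y x).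
  transitivity (c * / (x - y)).
  { unfold c. field. split; auto. }
  rewrite (geom_id x y N) by auto.
  rewrite Cmult_plus_distr_l, <- csum_mult_l.
  f_equal.
  - apply csum_ext. intros k _. unfold c. rewrite Cpow_add_r. field. auto.
  - unfold c. rewrite Cpow_add_r. field. auto.
Qed.

Lemma comb_sum (y : C) (Y : list C) a b N : (a < N)%nat ->
  csum (fun k => y ^ k * (RtoC (2 * PI) * (if Nat.leb (b + S k) a then G Y (a - (b + S k)) else 0))) N
  = RtoC (2 * PI) * (if Nat.leb b a then G (y :: Y) (a - b) else 0).
Proof.
  intros HN.
  transitivity (csum (fun k => RtoC (2 * PI) * (y ^ k * (if Nat.leb (b + S k) a then G Y (a - (b + S k)) else 0))) N).
  { apply csum_ext; intros; ring. }
  rewrite (csum_mult_l _ (fun k => y ^ k * (if Nat.leb (b + S k) a then G Y (a - (b + S k)) else 0))).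
  f_equal. simpl G.
  destruct (Nat.leb_spec b a) as [Hba|Hba].
  - etransitivity. apply (csum_trunc (fun k => y ^ k * (if Nat.leb (b + S k) a then G Y (a - (b + S k)) else 0)) (a - b) N). lia.
    + intros k Hk. destruct (Nat.leb_spec (b + S k) a); try lia. ring.
    + apply csum_ext. intros k Hk. destruct (Nat.leb_spec (b + S k) a); try lia.
      f_equal. f_equal. lia.
  - etransitivity. apply (csum_trunc (fun k => y ^ k * (if Nat.leb (b + S k) a then G Y (a - (b + S k)) else 0)) 0 N). lia.
    intros k Hk. destruct (Nat.leb_spec (b + S k) a); try lia. ring. reflexivity.
Qed.

Lemma Cminus_eq (a b : C) : a - b = 0 -> a = b.
Proof. intros H. replace a with (a - b + b) by ring. rewrite H; ring. Qed.

Lemma contour Y r a b : (0 < r)%R -> Inr r Y ->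
  is_RInt (V := CV) (Fm Y r a b) 0 (2 * PI)
    (RtoC (2 * PI) * (if Nat.leb b a then G Y (a - b) else 0)).
Proof.
  intros Hr. revert a b. induction Y as [|y Y IH]; intros a b HY.
  - apply (CRInt_ext (fun t => circ r t ^ a * (/ circ r t) ^ b)).
    { intros t; unfold Fm, Pr; simpl. field. }
    eapply is_RInt_val. apply xw_int; auto.
    simpl. destruct (Nat.eqb_spec a b), (Nat.leb_spec b a), (Nat.eqb_spec (a - b) 0); try lia; try ring.
  - destruct (Inr_cons _ _ _ HY) as [Hy HY'].
    destruct (CC_ex_RInt _ 0 (2 * PI) (CC_Fm (y :: Y) r a b Hr HY)) as [V HV].
    eapply is_RInt_val. apply HV.
    apply Cminus_eq.
    apply (small_zero _ (2 * PI * (r ^ a * (/ r) ^ b * / LB r (y :: Y))) (Cmod y / r) (S a)).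
    { split. apply Rmult_le_pos. apply Cmod_ge_0. left; apply Rinv_0_lt_compat; auto.
      apply Rmult_lt_reg_r with r; auto. unfold Rdiv. rewrite Rmult_assoc, Rinv_l; lra. }
    intros N HN.
    destruct (CC_ex_RInt _ 0 (2 * PI) (CC_Fm (y :: Y) r a (b + N) Hr HY)) as [W HW].
    assert (H2 := CRInt_plus _ _ _ _ _ _
       (CRInt_csum (fun k t => y ^ k * Fm Y r a (b + S k) t) _ 0 (2 * PI) N
          (fun k => CRInt_mult_l (y ^ k) _ _ _ _ (IH a (b + S k)%nat HY')))
       (CRInt_mult_l (y ^ N) _ _ _ _ HW)).
    simpl in H2.
    eapply (CRInt_ext _ (Fm (y :: Y) r a b)) in H2.
    2: { intros t. symmetry. apply Fm_split; auto. }
    apply is_RInt_unique in H2. apply is_RInt_unique in HV. rewrite HV in H2.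
    rewrite H2. rewrite comb_sum by lia.
    replace (RtoC (2 * PI) * (if Nat.leb b a then G (y :: Y) (a - b) else 0) + y ^ N * W -
      RtoC (2 * PI) * (if Nat.leb b a then G (y :: Y) (a - b) else 0)) with (y ^ N * W) by ring.
    rewrite Cmod_mult, Cmod_pow.
    assert (HWb := CRInt_bound _ 0 (2 * PI) W _ ltac:(pose proof PI_RGT_0; lra)
                     (fun t _ => Fm_bound (y :: Y) r a (b + N) t Hr HY) HW).
    eapply Rle_trans. apply Rmult_le_compat_l. apply pow_le, Cmod_ge_0. apply HWb.
    rewrite pow_add. unfold Rdiv. rewrite Rpow_mult_distr. right. ring.
Qed.

Close Scope C_scope. Open Scope R_scope.
Open Scope C_scope.

Definition ifact (n : nat) : R := (/ INR (fact n))%R.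

Lemma ifact_S n : ifact (S n) = (ifact n / INR (S n))%R.
Proof.
  unfold ifact. rewrite fact_simpl, mult_INR. field. split; apply not_0_INR; try lia.
  pose proof (lt_O_fact n); lia.
Qed.

Lemma ifact_pos n : (0 < ifact n)%R.
Proof. unfold ifact. apply Rinv_0_lt_compat, lt_0_INR, lt_O_fact. Qed.

Lemma int_pow_R (n : nat) (s : R) :
  is_RInt (fun u => u ^ n * ifact n)%R 0 s (s ^ S n * ifact (S n))%R.
Proof.
  eapply is_RInt_val.
  apply (is_RInt_derive (V:=R_CompleteNormedModule) (fun u => u ^ S n * ifact (S n))%R).
  - intros x _. auto_derive; auto. rewrite ifact_S.
    change (match n with 0%nat => 1 | S _ => INR n + 1 end)%R with (INR (S n)).
    field. apply not_0_INR; lia.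
  - intros x _. apply cont_of_ex_derive. auto_derive; auto.
  - unfold minus, plus, opp; simpl. ring.
Qed.

Lemma CRInt_RtoC (f : R -> R) a b l :
  is_RInt f a b l -> is_RInt (V := CV) (fun u => RtoC (f u)) a b (RtoC l).
Proof.
  intros H. apply CRInt_pair; simpl; auto.
  eapply is_RInt_val. apply (is_RInt_const (V:=R_NormedModule)).
  unfold scal; simpl; unfold mult; simpl; ring.
Qed.

Lemma int_pow_C (n : nat) (s : R) (w : C) :
  is_RInt (V := CV) (fun u => RtoC (u ^ n * ifact n) * w) 0 s (RtoC (s ^ S n * ifact (S n)) * w).
Proof.
  apply (CRInt_ext (fun u => w * RtoC (u ^ n * ifact n))). intros; ring.
  eapply CRInt_eqv. 2: apply CRInt_mult_l, CRInt_RtoC, int_pow_R. ring.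
Qed.

Lemma Cmod_cexp z : Cmod (cexp z) = exp (fst z).
Proof.
  unfold Cmod, cexp; cbn [fst snd].
  assert (H := sin2_cos2 (snd z)); unfold Rsqr in H.
  replace ((exp (fst z) * cos (snd z)) ^ 2 + (exp (fst z) * sin (snd z)) ^ 2)%R
    with (exp (fst z) ^ 2)%R. apply sqrt_pow2. left; apply exp_pos.
  replace (exp (fst z) ^ 2)%R with (exp (fst z) ^ 2 * 1)%R by ring. rewrite <- H. ring.
Qed.

Lemma int_cexp (z : C) (s : R) :
  is_RInt (V := CV) (fun u => z * cexp (RtoC u * z)) 0 s (cexp (RtoC s * z) - 1).
Proof.
  destruct z as [a b].
  apply CRInt_pair; simpl.
  - eapply is_RInt_val.
    apply (is_RInt_derive (V:=R_CompleteNormedModule) (fun u => exp (u * a - 0 * b) * cos (u * b + 0 * a))%R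
      (fun t => (a * (exp (t * a - 0 * b) * cos (t * b + 0 * a)) -
     b * (exp (t * a - 0 * b) * sin (t * b + 0 * a)))%R)).
    + intros x _. auto_derive; auto. unfold Rminus. ring.
    + intros x _. apply cont_of_ex_derive. auto_derive; auto.
    + unfold minus, plus, opp; simpl. rewrite !Rmult_0_l, !Rminus_0_r, !Rplus_0_r, exp_0, cos_0. ring.
  - eapply is_RInt_val.
    apply (is_RInt_derive (V:=R_CompleteNormedModule) (fun u => exp (u * a - 0 * b) * sin (u * b + 0 * a))%R
      (fun t => (a * (exp (t * a - 0 * b) * sin (t * b + 0 * a)) +
     b * (exp (t * a - 0 * b) * cos (t * b + 0 * a)))%R)).
    + intros x _. auto_derive; auto. unfold Rminus. ring.
    + intros x _. apply cont_of_ex_derive. auto_derive; auto.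
    + unfold minus, plus, opp; simpl. rewrite !Rmult_0_l, !Rminus_0_r, !Rplus_0_r, exp_0, sin_0. ring.
Qed.

Lemma csum_shift (f : nat -> C) N : csum f (S N) = f O + csum (fun n => f (S n)) N.
Proof. induction N. simpl; ring. change (csum f (S (S N))) with (csum f (S N) + f (S N)).
  rewrite IHN. simpl. ring. Qed.

Definition Rm (N : nat) (z : C) (s : R) : C :=
  cexp (RtoC s * z) - csum (fun n => RtoC (s ^ n * ifact n) * z ^ n) N.

Lemma Rm_int N z s : is_RInt (V := CV) (fun u => z * Rm N z u) 0 s (Rm (S N) z s).
Proof.
  apply (CRInt_ext (fun u => z * cexp (RtoC u * z) - csum (fun n => RtoC (u ^ n * ifact n) * z ^ (S n)) N)).
  { intros u. unfold Rm, Cminus. rewrite Cmult_plus_distr_l.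
    replace (z * - csum (fun n : nat => RtoC (u ^ n * ifact n) * z ^ n) N) with
      (- (z * csum (fun n : nat => RtoC (u ^ n * ifact n) * z ^ n) N)) by ring.
    rewrite <- csum_mult_l. f_equal. f_equal. apply csum_ext. intros; simpl; ring. }
  eapply CRInt_eqv. 2: apply CRInt_minus. 2: apply int_cexp.
  2: apply (CRInt_csum (fun n u => RtoC (u ^ n * ifact n) * z ^ S n)). 2: intros; apply int_pow_C.
  unfold Rm. rewrite csum_shift.
  assert (E0 : RtoC (s ^ 0 * ifact 0) * z ^ 0 = 1).
  { unfold ifact; simpl. rewrite Rinv_1. apply Ceq; simpl; ring. }
  rewrite E0. ring.
Qed.

Lemma exp_le x y : (x <= y)%R -> (exp x <= exp y)%R.
Proof. intros [H|H]. left; apply exp_increasing; auto. right; subst; auto. Qed.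

Lemma Rm_bound z N s : (0 <= s <= 1)%R ->
  (Cmod (Rm N z s) <= Cmod z ^ N * (s ^ N * ifact N) * exp (Cmod z))%R.
Proof.
  revert s. induction N; intros s Hs.
  - unfold Rm; simpl csum. replace (cexp (RtoC s * z) - 0) with (cexp (RtoC s * z)) by ring.
    rewrite Cmod_cexp. unfold ifact; simpl. rewrite Rinv_1.
    replace (1 * (1 * 1) * exp (Cmod z))%R with (exp (Cmod z)) by ring.
    apply exp_le. rewrite !Rmult_0_l, Rminus_0_r.
    pose proof (re_le_Cmod z). unfold Re in H. pose proof (Rle_abs (fst z)).
    pose proof (Rabs_pos (fst z)). destruct (Rle_dec 0 (fst z)); nra.
  - pose proof (Rm_int N z s) as H.
    rewrite <- normCV.
    apply (norm_RInt_le (V:=CV) (fun u => z * Rm N z u) (fun u => Cmod z ^ S N * exp (Cmod z) * (u ^ N * ifact N))%R 0 s).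
    lra. 2: apply H.
    2: { eapply is_RInt_val. apply (is_RInt_scal (V:=R_NormedModule)), int_pow_R.
         unfold scal; simpl; unfold mult; simpl. ring. }
    intros u Hu. rewrite normCV, Cmod_mult. simpl pow.
    specialize (IHN u ltac:(lra)).
    replace (Cmod z * Cmod z ^ N * exp (Cmod z) * (u ^ N * ifact N))%R with
      (Cmod z * (Cmod z ^ N * (u ^ N * ifact N) * exp (Cmod z)))%R by ring.
    apply Rmult_le_compat_l; auto. apply Cmod_ge_0.
Qed.

Close Scope C_scope. Open Scope R_scope.
Open Scope C_scope.

Lemma sumCmod_ge Y y : In y Y -> (Cmod y <= fold_right (fun y acc => Cmod y + acc) 0 Y)%R.
Proof.
  induction Y as [|z Y IH]; simpl; [tauto|]. intros [->|H].
  - assert (0 <= fold_right (fun y acc => Cmod y + acc) 0 Y)%R.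
    { clear. induction Y; simpl. lra. pose proof (Cmod_ge_0 a); lra. }
    lra.
  - specialize (IH H). pose proof (Cmod_ge_0 z); lra.
Qed.

Lemma rad_Inr Y : Inr (dd_radius Y) Y.
Proof. intros y H. unfold dd_radius. pose proof (sumCmod_ge Y y H). lra. Qed.

Lemma rad_pos Y : (0 < dd_radius Y)%R.
Proof.
  unfold dd_radius. assert (0 <= fold_right (fun y acc => Cmod y + acc) 0 Y)%R.
  { clear. induction Y; simpl. lra. pose proof (Cmod_ge_0 a); lra. } lra.
Qed.

Lemma CC_csum (f : nat -> R -> C) N : (forall n, CC (f n)) -> CC (fun t => csum (fun n => f n t) N).
Proof. intros H; induction N; simpl. apply CC_const. apply CC_plus; auto. Qed.

Definition Eint (t : R) (Y : list C) (th : R) : C :=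
  cexp (RtoC t * circ (dd_radius Y) th) * circ (dd_radius Y) th * / Pr Y (circ (dd_radius Y) th).

Lemma expdd_Eint t Y : expdd t Y = RtoC (/ (2 * PI)) * RInt (V := CV) (Eint t Y) 0 (2 * PI).
Proof. reflexivity. Qed.

Definition D (N : nat) (t : R) (Y : list C) : C :=
  csum (fun n => RtoC (t ^ n * ifact n) * G Y (S n)) N.

Lemma Eint_split t Y N th :
  Eint t Y th = csum (fun n => RtoC (t ^ n * ifact n) * Fm Y (dd_radius Y) (S n) 0 th) N
     + Rm N (RtoC t * circ (dd_radius Y) th) 1 * (circ (dd_radius Y) th * / Pr Y (circ (dd_radius Y) th)).
Proof.
  unfold Eint, Rm. set (x := circ (dd_radius Y) th). set (P := Pr Y x).
  rewrite Cmult_1_l.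
  replace (csum (fun n => RtoC (t ^ n * ifact n) * Fm Y (dd_radius Y) (S n) 0 th) N)
    with ((x * / P) * csum (fun k => RtoC (1 ^ k * ifact k) * (RtoC t * x) ^ k) N). ring.
  rewrite <- csum_mult_l.
  apply csum_ext. intros k _. unfold Fm. fold x. fold P.
  rewrite Cpow_mult_l, <- RtoC_pow, pow1, !RtoC_mult. simpl Cpow. ring.
Qed.

Lemma CC_Rm N (f : R -> C) : CC f -> CC (fun th => Rm N (f th) 1).
Proof.
  intros Hf. unfold Rm. apply CC_minus. apply CC_cexp, CC_mult; auto. apply CC_const.
  apply (CC_csum (fun n th => RtoC (1 ^ n * ifact n) * f th ^ n)). intros n.
  apply CC_mult. apply CC_const. apply CC_pow; auto.
Qed.

Lemma Cmod_RtoC_pos (a : R) : (0 <= a)%R -> Cmod (RtoC a) = a.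
Proof. intros H. rewrite Cmod_R, Rabs_right; lra. Qed.

Lemma expdd_approx t Y N :
  (Cmod (expdd t Y - D N t Y) <=
   (Rabs t * dd_radius Y) ^ N * ifact N * exp (Rabs t * dd_radius Y) * (dd_radius Y / LB (dd_radius Y) Y))%R.
Proof.
  set (r := dd_radius Y).
  assert (Hr : (0 < r)%R) by apply rad_pos. assert (HY : Inr r Y) by apply rad_Inr.
  set (Rf := fun th => Rm N (RtoC t * circ r th) 1 * (circ r th * / Pr Y (circ r th))).
  assert (CRf : CC Rf).
  { unfold Rf. apply CC_mult. apply CC_Rm. apply CC_mult. apply CC_const. apply CC_circ.
    apply CC_mult. apply CC_circ. apply CC_inv. apply CC_Pr, CC_circ. intros; apply Pr_neq0; auto. }
  destruct (CC_ex_RInt Rf 0 (2 * PI) CRf) as [Rem HRem].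
  assert (HS := CRInt_csum (fun n th => RtoC (t ^ n * ifact n) * Fm Y r (S n) 0 th) _ 0 (2 * PI) N
          (fun n => CRInt_mult_l (RtoC (t ^ n * ifact n)) _ _ _ _ (contour Y r (S n) 0 Hr HY))).
  assert (HF := CRInt_plus _ _ _ _ _ _ HS HRem).
  apply (CRInt_ext _ (Eint t Y)) in HF. 2: { intros th. symmetry. apply Eint_split. }
  apply is_RInt_unique in HF.
  rewrite expdd_Eint, HF.
  assert (ES : csum (fun n => RtoC (t ^ n * ifact n) * (RtoC (2 * PI) * (if Nat.leb 0 (S n) then G Y (S n - 0) else 0))) N
               = RtoC (2 * PI) * D N t Y).
  { unfold D. rewrite <- csum_mult_l. apply csum_ext. intros k _. simpl. ring. }
  rewrite ES.
  assert (HPI : (0 < PI)%R) by apply PI_RGT_0.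
  replace (RtoC (/ (2 * PI)) * (RtoC (2 * PI) * D N t Y + Rem) - D N t Y) with (RtoC (/ (2 * PI)) * Rem).
  2: { rewrite Cmult_plus_distr_l, Cmult_assoc, <- RtoC_mult, Rinv_l by lra. ring. }
  set (B := ((Rabs t * r) ^ N * ifact N * exp (Rabs t * r) * (r / LB r Y))%R).
  assert (Hb : (Cmod Rem <= (2 * PI - 0) * B)%R).
  { apply (CRInt_bound Rf 0 (2 * PI) Rem B); auto. lra.
    intros th _. unfold Rf, B. rewrite Cmod_mult.
    destruct (Pr_lb r th Y Hr HY) as [HL1 HL2].
    assert (Hz : Cmod (RtoC t * circ r th) = (Rabs t * r)%R).
    { rewrite Cmod_mult, Cmod_R, Cmod_circ; lra. }
    apply Rmult_le_compat. apply Cmod_ge_0. apply Cmod_ge_0.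
    - eapply Rle_trans. apply Rm_bound. lra. rewrite Hz, pow1. right; ring.
    - rewrite Cmod_mult, Cmod_circ, Cmod_inv by (try lra; apply Pr_neq0; auto).
      unfold Rdiv. apply Rmult_le_compat_l. lra. apply Rinv_le_contravar; auto. }
  rewrite Cmod_mult, Cmod_RtoC_pos by (left; apply Rinv_0_lt_compat; lra).
  apply Rmult_le_reg_l with (2 * PI)%R. lra.
  rewrite <- Rmult_assoc, Rinv_r by lra. lra.
Qed.

Close Scope C_scope. Open Scope R_scope.
Open Scope C_scope.

Lemma ball_C (x y : C) (eps : R) : (Cmod (y - x) < eps)%R -> @ball CV x eps y.
Proof.
  intros H. apply (norm_compat1 (K:=R_AbsRing) (V:=CV)). rewrite normCV. exact H.
Qed.

Lemma approx_RInt (f : R -> C) (fN : nat -> R -> C) (IN : nat -> C) a b V : (a < b)%R ->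
  (forall N, is_RInt (V := CV) (fN N) a b (IN N)) ->
  (forall eps : R, (0 < eps)%R -> exists N0, forall N, (N0 <= N)%nat ->
      (forall t, (a <= t <= b)%R -> (Cmod (f t - fN N t) <= eps)%R) /\ (Cmod (IN N - V) <= eps)%R) ->
  is_RInt (V := CV) f a b V.
Proof.
  intros Hab HI Happ.
  set (c := fun t => Rmax a (Rmin b t)).
  assert (Hc : forall t, (a <= c t <= b)%R).
  { intros t; unfold c. split. apply Rmax_l. apply Rmax_lub. lra. apply Rmin_l. }
  assert (Hc2 : forall t, (Rmin a b < t < Rmax a b)%R -> c t = t).
  { intros t Ht. rewrite Rmin_left, Rmax_right in Ht by lra. unfold c.
    rewrite Rmin_right by lra. rewrite Rmax_right by lra. auto. }
  set (g := fun t => f (c t)).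
  set (gN := fun N t => fN N (c t)).
  assert (HIg : forall N, is_RInt (V := CV) (gN N) a b (IN N)).
  { intros N. apply (is_RInt_ext (V:=CV) (fN N)). intros t Ht. unfold gN. rewrite Hc2; auto. auto. }
  assert (HL := @filterlim_RInt nat CV gN a b eventually eventually_filter g IN HIg).
  assert (Hg : filterlim gN eventually (@locally (fct_UniformSpace R CV) g)).
  { apply (filterlim_locally (F:=eventually) (U:=fct_UniformSpace R CV)). intros eps.
    destruct (Happ (eps / 2)%R) as [N0 HN0]. destruct eps; simpl; lra.
    exists N0. intros N HN. intros t. unfold gN, g. apply ball_C.
    destruct (HN0 N HN) as [HA _]. specialize (HA (c t) (Hc t)).
    replace (fN N (c t) - f (c t)) with (- (f (c t) - fN N (c t))) by ring.
    rewrite Cmod_opp. destruct eps; simpl in *; lra. }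
  destruct (HL Hg) as [If [H1 H2]].
  assert (E : If = V).
  { apply (filterlim_locally_unique (K:=R_AbsRing) (V:=CV) (F:=eventually) IN If V). exact H1.
    apply (filterlim_locally (F:=eventually) (U:=CV)). intros eps.
    destruct (Happ (eps / 2)%R) as [N0 HN0]. destruct eps; simpl; lra.
    exists N0. intros N HN. apply ball_C.
    destruct (HN0 N HN) as [_ HB]. destruct eps; simpl in *; lra. }
  subst If. apply (is_RInt_ext (V:=CV) g). intros t Ht. unfold g. rewrite Hc2; auto. auto.
Qed.

Close Scope C_scope. Open Scope R_scope.
Open Scope C_scope.

Lemma csum_last (f : nat -> C) n : csum f (S n) = csum f n + f n.
Proof. reflexivity. Qed.

Lemma csum_mult_r c (f : nat -> C) n : csum (fun k => f k * c) n = csum f n * c.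
Proof. induction n; simpl. ring. rewrite IHn; ring. Qed.

Definition conv (f g : nat -> C) (k : nat) : C := csum (fun i => f i * g (k - i)%nat) (S k).

Lemma tri_swap (F : nat -> nat -> C) k :
  csum (fun m => csum (fun i => F i m) (S m)) (S k) =
  csum (fun i => csum (fun j => F i (i + j)%nat) (S (k - i))) (S k).
Proof.
  induction k.
  - simpl. ring.
  - rewrite csum_last, IHk.
    rewrite (csum_last (fun i => csum (fun j => F i (i + j)%nat) (S (S k - i))) (S k)).
    replace (S k - S k)%nat with O by lia.
    rewrite (csum_ext (fun i => csum (fun j => F i (i + j)%nat) (S (S k - i))) 
                      (fun i => csum (fun j => F i (i + j)%nat) (S (k - i)) + F i (S k)) (S k)).
    2: { intros i Hi. replace (S k - i)%nat with (S (k - i)) by lia. rewrite csum_last.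
         f_equal. f_equal. lia. }
    rewrite csum_plus. rewrite (csum_last (fun i => F i (S k)) (S k)).
    simpl (csum (fun j => F (S k) (S k + j)%nat) 1). rewrite Nat.add_0_r. ring.
Qed.

Lemma conv_ext_l f f' g k : (forall i, f i = f' i) -> conv f g k = conv f' g k.
Proof. intros H; unfold conv; apply csum_ext; intros; rewrite H; auto. Qed.
Lemma conv_ext_r f g g' k : (forall i, g i = g' i) -> conv f g k = conv f g' k.
Proof. intros H; unfold conv; apply csum_ext; intros; rewrite H; auto. Qed.

Lemma conv_assoc f g h k : conv f (conv g h) k = conv (conv f g) h k.
Proof.
  unfold conv.
  rewrite (csum_ext (fun m => csum (fun i => f i * g (m - i)%nat) (S m) * h (k - m)%nat)
                    (fun m => csum (fun i => f i * g (m - i)%nat * h (k - m)%nat) (S m)) (S k)).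
  2: { intros; rewrite <- csum_mult_r; auto. }
  rewrite (tri_swap (fun i m => f i * g (m - i)%nat * h (k - m)%nat) k).
  apply csum_ext. intros i Hi. rewrite <- csum_mult_l. apply csum_ext. intros j Hj.
  replace (i + j - i)%nat with j by lia. replace (k - (i + j))%nat with (k - i - j)%nat by lia. ring.
Qed.

Definition delta (i : nat) : C := if Nat.eqb i 0 then RtoC 1 else RtoC 0.

Lemma conv_delta g k : conv delta g k = g k.
Proof.
  unfold conv. rewrite csum_shift. unfold delta at 1. simpl Nat.eqb. rewrite Nat.sub_0_r.
  rewrite (csum_ext _ (fun _ => RtoC 0)). rewrite csum_zero. ring.
  intros; unfold delta; simpl. ring.
Qed.

Definition ucoef (y : C) (i : nat) : C := if Nat.eqb i 0 then RtoC 0 else y ^ (i - 1).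

Lemma G_cons y Y k : G (y :: Y) k = conv (ucoef y) (G Y) k.
Proof.
  unfold conv. rewrite csum_shift. unfold ucoef at 1. simpl Nat.eqb. simpl G.
  rewrite Cmult_0_l, Cplus_0_l. apply csum_ext. intros i Hi. unfold ucoef; simpl.
  rewrite Nat.sub_0_r. reflexivity.
Qed.

Lemma G_app Y0 Y1 k : G (Y0 ++ Y1) k = conv (G Y0) (G Y1) k.
Proof.
  revert k. induction Y0 as [|y Y0 IH]; intros k.
  - simpl app. rewrite <- conv_delta. apply conv_ext_l. intros i. reflexivity.
  - simpl app. rewrite G_cons. rewrite (conv_ext_r _ _ _ k IH). rewrite conv_assoc.
    apply conv_ext_l. intros i. rewrite G_cons. auto.
Qed.

Lemma G_nonempty_0 Y : Y <> nil -> G Y 0 = 0.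
Proof. destruct Y. tauto. intros _; reflexivity. Qed.

Lemma G_coef Y0 Y1 k : Y0 <> nil -> Y1 <> nil ->
  G (Y0 ++ Y1) (S k) = csum (fun n => G Y0 (S n) * G Y1 (S (k - S n))) k.
Proof.
  intros H0 H1. rewrite G_app. unfold conv. rewrite csum_shift. rewrite G_nonempty_0 by auto.
  rewrite csum_last. replace (S k - S k)%nat with O by lia. rewrite (G_nonempty_0 Y1) by auto.
  replace (0 * G Y1 (S k - 0)) with (RtoC 0) by ring.
  replace (G Y0 (S k) * 0) with (RtoC 0) by ring. rewrite Cplus_0_l, Cplus_0_r.
  apply csum_ext. intros n Hn. f_equal. f_equal. lia.
Qed.

Definition sq (K : nat) (F : nat -> nat -> C) : C := csum (fun n => csum (fun m => F n m) K) K.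

Lemma csum_single (g : nat -> C) j M : (j < M)%nat ->
  csum (fun m => if Nat.eqb m j then g m else 0) M = g j.
Proof.
  induction M; intros H. lia.
  rewrite csum_last. destruct (Nat.eqb_spec M j).
  - subst j. rewrite (csum_ext _ (fun _ => RtoC 0)). rewrite csum_zero. ring.
    intros k Hk. destruct (Nat.eqb_spec k M); try lia. auto.
  - rewrite IHM by lia. ring.
Qed.

Lemma csum_zero' (f : nat -> C) n : (forall k, (k < n)%nat -> f k = 0) -> csum f n = 0.
Proof. intros H. rewrite (csum_ext _ (fun _ => RtoC 0)); auto. apply csum_zero. Qed.

Lemma tri_sq (F : nat -> nat -> C) K :
  csum (fun k => csum (fun n => F n (k - S n)%nat) k) K =
  sq K (fun n m => if Nat.ltb (S (n + m)) K then F n m else 0).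
Proof.
  unfold sq. induction K.
  - reflexivity.
  - rewrite csum_last, IHK.
    transitivity (csum (fun n => csum (fun m => (if Nat.ltb (S (n + m)) K then F n m else 0)
                                       + (if Nat.eqb m (K - S n) then (if Nat.ltb n K then F n m else 0) else 0)) (S K)) (S K)).
    2: { apply csum_ext; intros n Hn; apply csum_ext; intros m Hm.
         destruct (Nat.ltb_spec (S (n + m)) K), (Nat.ltb_spec (S (n + m)) (S K)),
           (Nat.eqb_spec m (K - S n)), (Nat.ltb_spec n K); try lia; ring. }
    rewrite (csum_ext (fun n => csum (fun m => (if Nat.ltb (S (n + m)) K then F n m else 0)
                                       + (if Nat.eqb m (K - S n) then (if Nat.ltb n K then F n m else 0) else 0)) (S K))
                 (fun n => csum (fun m => if Nat.ltb (S (n + m)) K then F n m else 0) (S K)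
                  + csum (fun m => if Nat.eqb m (K - S n) then (if Nat.ltb n K then F n m else 0) else 0) (S K))).
    2: { intros; apply csum_plus. }
    rewrite csum_plus. f_equal.
    + rewrite csum_last. rewrite (csum_zero' (fun m => if Nat.ltb (S (K + m)) K then F K m else 0)).
      2: { intros k _. destruct (Nat.ltb_spec (S (K + k)) K); try lia. auto. }
      rewrite Cplus_0_r. apply csum_ext. intros n Hn. rewrite csum_last.
      destruct (Nat.ltb_spec (S (n + K)) K); try lia. ring.
    + rewrite csum_last. rewrite (csum_zero' (fun m => if Nat.eqb m (K - S K) then (if Nat.ltb K K then F K m else 0) else 0)).
      2: { intros k _. destruct (Nat.ltb_spec K K); try lia. destruct (Nat.eqb k (K - S K)); auto. }
      rewrite Cplus_0_r. apply csum_ext. intros n Hn.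
      rewrite (csum_single (fun m => if Nat.ltb n K then F n m else 0)) by lia.
      destruct (Nat.ltb_spec n K); try lia. auto.
Qed.

Lemma csum_bound (f : nat -> C) n B : (forall k, (k < n)%nat -> (Cmod (f k) <= B)%R) ->
  (Cmod (csum f n) <= INR n * B)%R.
Proof.
  induction n; intros H; simpl csum.
  - rewrite Cmod_0. simpl; lra.
  - eapply Rle_trans. apply Cmod_triangle. rewrite S_INR.
    assert (H1 := H n (Nat.lt_succ_diag_r n)). assert (IH := IHn (fun k Hk => H k ltac:(lia))).
    lra.
Qed.

Lemma sq_bound K F B : (forall n m, (n < K)%nat -> (m < K)%nat -> (Cmod (F n m) <= B)%R) ->
  (Cmod (sq K F) <= INR K * (INR K * B))%R.
Proof.
  intros H. unfold sq. apply csum_bound. intros n Hn. apply csum_bound. intros m Hm. auto.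
Qed.

Close Scope C_scope. Open Scope R_scope.
Open Scope R_scope.

Lemma beta_int m n (b : R) :
  is_RInt (fun u => u ^ m * (b - u) ^ n * (ifact m * ifact n)) 0 b (b ^ (m + n + 1) * ifact (m + n + 1)).
Proof.
  revert m. induction n; intros m.
  - eapply is_RInt_ext. 2: eapply is_RInt_val. 2: apply (int_pow_R m b).
    + intros; simpl. replace (ifact 0) with 1 by (unfold ifact; simpl; rewrite Rinv_1; auto). ring.
    + rewrite Nat.add_0_r, Nat.add_1_r. reflexivity.
  - set (H := fun u => u ^ S m * (b - u) ^ S n * (ifact (S m) * ifact (S n))).
    set (dH := fun u => u ^ m * (b - u) ^ S n * (ifact m * ifact (S n)) - u ^ S m * (b - u) ^ n * (ifact (S m) * ifact n)).
    assert (HdH : is_RInt dH 0 b 0).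
    { eapply is_RInt_val. apply (is_RInt_derive (V:=R_CompleteNormedModule) H dH).
      - intros x _. unfold H, dH. auto_derive; auto. rewrite !ifact_S.
        change (match m with 0%nat => 1 | S _ => INR m + 1 end) with (INR (S m)).
        change (match n with 0%nat => 1 | S _ => INR n + 1 end) with (INR (S n)).
        unfold Rminus. simpl pow. field. split; apply not_0_INR; lia.
      - intros x _. unfold dH. apply cont_of_ex_derive. auto_derive; auto.
      - unfold H, minus, plus, opp; simpl. ring. }
    eapply is_RInt_ext. 2: eapply is_RInt_val. 2: apply (is_RInt_plus (V:=R_NormedModule) _ _ _ _ _ _ HdH (IHn (S m))).
    + intros u _. unfold dH, plus; simpl. ring.
    + unfold plus; simpl. replace (m + S n + 1)%nat with (S (m + n + 1)) by lia. simpl. ring.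
Qed.

From Stdlib Require Import ZArith.
Close Scope C_scope. Open Scope R_scope.
Open Scope R_scope.

Lemma exists_nat_ge X : exists N, X <= INR N.
Proof.
  destruct (archimed X) as [H1 H2].
  destruct (Z_le_gt_dec 0 (up X)) as [Hz|Hz].
  - exists (Z.to_nat (up X)). rewrite INR_IZR_INZ, Z2Nat.id by auto. lra.
  - exists O. simpl. assert (Hz2 : (up X < 0)%Z) by lia. apply IZR_lt in Hz2. lra.
Qed.

Lemma psi_small X eps : 0 < eps -> exists N0, forall N, (N0 <= N)%nat -> X ^ N * ifact N <= eps.
Proof.
  intros He. destruct (cv_speed_pow_fact X eps He) as [N0 HN0].
  exists N0. intros N HN. specialize (HN0 N HN). unfold R_dist in HN0.
  unfold ifact. unfold Rdiv in HN0. rewrite Rminus_0_r in HN0.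
  pose proof (Rle_abs (X ^ N * / INR (fact N))). lra.
Qed.

Lemma phi_mono X N k : 0 <= X -> X <= INR N -> (N <= k)%nat -> X ^ k * ifact k <= X ^ N * ifact N.
Proof.
  intros HX HN Hk. induction Hk. lra.
  eapply Rle_trans; [|apply IHHk]. rewrite ifact_S. simpl pow.
  assert (0 < INR (S m)) by (apply lt_0_INR; lia).
  assert (X <= INR (S m)). { rewrite S_INR. apply le_INR in Hk. lra. }
  pose proof (ifact_pos m). assert (0 <= X ^ m) by (apply pow_le; auto).
  unfold Rdiv. 
  replace (X * X ^ m * (ifact m * / INR (S m))) with ((X ^ m * ifact m) * (X / INR (S m))) by (field; lra).
  rewrite <- (Rmult_1_r (X ^ m * ifact m)) at 2.
  apply Rmult_le_compat_l. apply Rmult_le_pos; lra.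
  apply Rmult_le_reg_r with (INR (S m)); auto. unfold Rdiv. rewrite Rmult_assoc, Rinv_l; lra.
Qed.

Lemma sq_le_4pow N : INR N * INR N <= 4 ^ N.
Proof.
  assert (H : forall N, INR N <= 2 ^ N).
  { induction N0. simpl; lra. rewrite S_INR. simpl.
    assert (1 <= 2 ^ N0) by (apply pow_R1_Rle; lra). lra. }
  replace 4 with (2 * 2) by ring. rewrite Rpow_mult_distr.
  apply Rmult_le_compat; auto; apply pos_INR.
Qed.

Close Scope C_scope. Open Scope R_scope.
Open Scope C_scope.

Lemma nodes_split (x : nat -> C) q j : (j <= q - 1)%nat -> (1 <= q)%nat ->
  nodes x 0 q = nodes x 0 j ++ nodes x (S j) q.
Proof.
  intros Hj Hq. unfold nodes. rewrite <- map_app. f_equal.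
  replace (S q - 0)%nat with (S j + (q - j))%nat by lia.
  rewrite seq_app. f_equal.
Qed.

Lemma nodes_ne (x : nat -> C) a b : (a <= b)%nat -> nodes x a b <> nil.
Proof.
  intros H. unfold nodes. replace (S b - a)%nat with (S (b - a)) by lia. simpl. discriminate.
Qed.

Lemma G_bound Y n : (Cmod (G Y n) <= dd_radius Y ^ n / LB (dd_radius Y) Y)%R.
Proof.
  set (r := dd_radius Y).
  assert (Hr : (0 < r)%R) by apply rad_pos. assert (HY : Inr r Y) by apply rad_Inr.
  assert (H := contour Y r n 0 Hr HY). simpl in H. rewrite Nat.sub_0_r in H.
  assert (HB := CRInt_bound _ 0 (2 * PI) _ (r ^ n * (/ r) ^ 0 * / LB r Y)%R ltac:(pose proof PI_RGT_0; lra)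
    (fun t _ => Fm_bound Y r n 0 t Hr HY) H).
  rewrite Cmod_mult, Cmod_RtoC_pos in HB by (pose proof PI_RGT_0; lra).
  simpl in HB. pose proof PI_RGT_0.
  apply Rmult_le_reg_l with (2 * PI)%R. lra. unfold Rdiv. lra.
Qed.

Lemma expdd_bound t Y : (Cmod (expdd t Y) <= exp (Rabs t * dd_radius Y) * (dd_radius Y / LB (dd_radius Y) Y))%R.
Proof.
  pose proof (expdd_approx t Y 0) as H. unfold D in H. simpl csum in H.
  replace (expdd t Y - 0) with (expdd t Y) in H by ring.
  unfold ifact in H. simpl in H. rewrite Rinv_1 in H. lra.
Qed.

Close Scope C_scope. Open Scope R_scope.
Open Scope C_scope.

Definition FF (beta : R) (Y0 Y1 : list C) (n m : nat) : C :=
  RtoC ((- beta) ^ (n + m + 1) * ifact (n + m + 1)) * (G Y0 (S n) * G Y1 (S m)).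

Lemma RtoC_opp' (x : R) : RtoC (- x) = - RtoC x.
Proof. apply Ceq; simpl; ring. Qed.

Lemma term_int beta Y0 Y1 n m :
  is_RInt (V := CV) (fun tau => RtoC ((- (beta - tau)) ^ n * ifact n) * G Y0 (S n) *
                                (RtoC ((- tau) ^ m * ifact m) * G Y1 (S m)))
    0 beta (- FF beta Y0 Y1 n m).
Proof.
  set (bn := G Y0 (S n)). set (am := G Y1 (S m)).
  apply (CRInt_ext (fun tau => (bn * am) * RtoC ((-1) ^ (n + m) * (tau ^ m * (beta - tau) ^ n * (ifact m * ifact n)))%R)).
  { intros tau.
    assert (E : forall x y : R, RtoC x * bn * (RtoC y * am) = (bn * am) * RtoC (x * y)).
    { intros; rewrite RtoC_mult; ring. }
    rewrite E. f_equal. f_equal.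
    replace (- (beta - tau))%R with (-1 * (beta - tau))%R by ring.
    replace (- tau)%R with (-1 * tau)%R by ring.
    rewrite !Rpow_mult_distr, pow_add. ring. }
  eapply CRInt_eqv.
  2: apply CRInt_mult_l, CRInt_RtoC, (is_RInt_scal (V:=R_NormedModule) _ _ _ ((-1) ^ (n + m))%R), beta_int.
  unfold FF. fold bn am.
  assert (L : forall x y : R, x = (- y)%R -> bn * am * RtoC x = - (RtoC y * (bn * am))).
  { intros x y ->. rewrite RtoC_opp'. ring. }
  apply L. unfold scal; simpl; unfold mult; simpl.
  replace (m + n + 1)%nat with (S (n + m)) by lia. replace (n + m + 1)%nat with (S (n + m)) by lia.
  replace (- beta)%R with (-1 * beta)%R by ring. rewrite Rpow_mult_distr. simpl pow. ring.
Qed.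

Lemma fN_int beta Y0 Y1 N :
  is_RInt (V := CV) (fun tau => D N (- (beta - tau)) Y0 * D N (- tau) Y1) 0 beta
    (sq N (fun n m => - FF beta Y0 Y1 n m)).
Proof.
  apply (CRInt_ext (fun tau => sq N (fun n m => RtoC ((- (beta - tau)) ^ n * ifact n) * G Y0 (S n) *
                                (RtoC ((- tau) ^ m * ifact m) * G Y1 (S m))))).
  { intros tau. unfold sq, D. rewrite <- csum_mult_r. apply csum_ext. intros n _.
    rewrite <- csum_mult_l. reflexivity. }
  unfold sq. apply (CRInt_csum (fun n tau => csum (fun m => _) N)). intros n.
  apply (CRInt_csum (fun m tau => _)). intros m. apply term_int.
Qed.

Close Scope C_scope. Open Scope R_scope.
Open Scope C_scope.

Lemma D_tri beta Y0 Y1 N : Y0 <> nil -> Y1 <> nil ->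
  D N (- beta) (Y0 ++ Y1) = sq N (fun n m => if Nat.ltb (S (n + m)) N then FF beta Y0 Y1 n m else 0).
Proof.
  intros H0 H1. rewrite <- tri_sq. unfold D. apply csum_ext. intros k _.
  rewrite G_coef by auto. rewrite <- csum_mult_l. apply csum_ext. intros n Hn.
  unfold FF. replace (n + (k - S n) + 1)%nat with k by lia.
  replace (S (k - S n)) with (k - n)%nat by lia. ring.
Qed.

Lemma sq_plus N F1 F2 : sq N F1 + sq N F2 = sq N (fun n m => F1 n m + F2 n m).
Proof.
  unfold sq. rewrite <- csum_plus. apply csum_ext. intros. rewrite csum_plus. auto.
Qed.

Lemma FF_bound beta Y0 Y1 n m : (0 <= beta)%R ->
  let R := (dd_radius Y0 + dd_radius Y1)%R in
  (Cmod (FF beta Y0 Y1 n m) <= (beta * R) ^ (n + m + 1) * ifact (n + m + 1) *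
      (R / (LB (dd_radius Y0) Y0 * LB (dd_radius Y1) Y1)))%R.
Proof.
  intros Hb R. unfold FF.
  pose proof (rad_pos Y0) as P0. pose proof (rad_pos Y1) as P1.
  destruct (Pr_lb (dd_radius Y0) 0 Y0 P0 (rad_Inr Y0)) as [L0 _].
  destruct (Pr_lb (dd_radius Y1) 0 Y1 P1 (rad_Inr Y1)) as [L1 _].
  rewrite !Cmod_mult, Cmod_R, Rabs_mult.
  rewrite (Rabs_right (ifact _)) by (left; apply ifact_pos).
  rewrite <- RPow_abs, Rabs_Ropp, (Rabs_right beta) by lra.
  pose proof (G_bound Y0 (S n)) as B0. pose proof (G_bound Y1 (S m)) as B1.
  assert (HR0 : (dd_radius Y0 ^ S n <= R ^ S n)%R). { apply pow_incr. unfold R. lra. }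
  assert (HR1 : (dd_radius Y1 ^ S m <= R ^ S m)%R). { apply pow_incr. unfold R. lra. }
  assert (E : (R ^ S n * R ^ S m = R * R ^ (n + m + 1))%R).
  { rewrite <- pow_add. replace (S n + S m)%nat with (S (n + m + 1)) by lia. reflexivity. }
  rewrite Rpow_mult_distr.
  pose proof (ifact_pos (n + m + 1)).
  assert (0 <= beta ^ (n + m + 1))%R by (apply pow_le; lra).
  assert (Hx : (Cmod (G Y0 (S n)) * Cmod (G Y1 (S m)) <= R ^ S n / LB (dd_radius Y0) Y0 * (R ^ S m / LB (dd_radius Y1) Y1))%R).
  { apply Rmult_le_compat; try apply Cmod_ge_0.
    eapply Rle_trans. apply B0. unfold Rdiv. apply Rmult_le_compat_r. left; apply Rinv_0_lt_compat; auto. auto.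
    eapply Rle_trans. apply B1. unfold Rdiv. apply Rmult_le_compat_r. left; apply Rinv_0_lt_compat; auto. auto. }
  replace (beta ^ (n + m + 1) * R ^ (n + m + 1) * ifact (n + m + 1) * (R / (LB (dd_radius Y0) Y0 * LB (dd_radius Y1) Y1)))%R
    with (beta ^ (n + m + 1) * ifact (n + m + 1) * (R ^ S n / LB (dd_radius Y0) Y0 * (R ^ S m / LB (dd_radius Y1) Y1)))%R.
  2: { unfold Rdiv. replace (R ^ S n * / LB (dd_radius Y0) Y0 * (R ^ S m * / LB (dd_radius Y1) Y1))%R
         with (R ^ S n * R ^ S m * / (LB (dd_radius Y0) Y0 * LB (dd_radius Y1) Y1))%R by (field; split; lra).
       rewrite E. field. split; lra. }
  apply Rmult_le_compat_l; auto. apply Rmult_le_pos; lra.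
Qed.

Lemma LB_pos Y : (0 < LB (dd_radius Y) Y)%R.
Proof. destruct (Pr_lb (dd_radius Y) 0 Y (rad_pos Y) (rad_Inr Y)); auto. Qed.

Lemma IN_close beta Y0 Y1 : (0 < beta)%R -> Y0 <> nil -> Y1 <> nil ->
  forall eps, (0 < eps)%R -> exists N0, forall N, (N0 <= N)%nat ->
  (Cmod (sq N (fun n m => - FF beta Y0 Y1 n m)%C - - expdd (- beta) (Y0 ++ Y1)) <= eps)%R.
Proof.
  intros Hb H0 H1 eps He.
  set (Y := Y0 ++ Y1). set (r := dd_radius Y).
  set (C2 := (exp (beta * r) * (r / LB r Y))%R).
  set (RR := (dd_radius Y0 + dd_radius Y1)%R).
  set (C1 := (RR / (LB (dd_radius Y0) Y0 * LB (dd_radius Y1) Y1))%R).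
  pose proof (rad_pos Y0). pose proof (rad_pos Y1). pose proof (rad_pos Y).
  pose proof (LB_pos Y0). pose proof (LB_pos Y1). pose proof (LB_pos Y).
  assert (HC1 : (0 < C1)%R). { unfold C1, RR. apply Rdiv_lt_0_compat. lra. apply Rmult_lt_0_compat; auto. }
  assert (HC2 : (0 < C2)%R). { unfold C2. apply Rmult_lt_0_compat. apply exp_pos. apply Rdiv_lt_0_compat; auto. }
  set (X := (beta * RR)%R). assert (HX : (0 <= X)%R) by (unfold X, RR; nra).
  destruct (exists_nat_ge X) as [N1 HN1].
  destruct (psi_small (4 * X) (eps / 2 / C1)) as [N2 HN2]. apply Rdiv_lt_0_compat; lra.
  destruct (psi_small (beta * r) (eps / 2 / C2)) as [N3 HN3]. apply Rdiv_lt_0_compat; lra.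
  exists (Nat.max N1 (Nat.max N2 N3)). intros N HN.
  assert (HNX : (X <= INR N)%R). { eapply Rle_trans. apply HN1. apply le_INR. lia. }
  replace (sq N (fun n m => - FF beta Y0 Y1 n m) - - expdd (- beta) Y) with
    ((sq N (fun n m => - FF beta Y0 Y1 n m) + D N (- beta) Y) + (expdd (- beta) Y - D N (- beta) Y)) by ring.
  eapply Rle_trans. apply Cmod_triangle. replace eps with (eps / 2 + eps / 2)%R by field.
  apply Rplus_le_compat.
  - unfold Y. rewrite D_tri by auto. rewrite sq_plus.
    eapply Rle_trans. apply (sq_bound N _ (X ^ N * ifact N * C1)%R).
    + intros n m Hn Hm. destruct (Nat.ltb_spec (S (n + m)) N).
      * replace (- FF beta Y0 Y1 n m + FF beta Y0 Y1 n m) with (RtoC 0) by ring. rewrite Cmod_0.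
        apply Rmult_le_pos; try lra. apply Rmult_le_pos. apply pow_le; auto. left; apply ifact_pos.
      * replace (- FF beta Y0 Y1 n m + 0) with (- FF beta Y0 Y1 n m) by ring. rewrite Cmod_opp.
        eapply Rle_trans. apply FF_bound. lra. fold RR. fold C1. fold X.
        apply Rmult_le_compat_r. lra. apply phi_mono; auto. lia.
    + assert (HN2' := HN2 N ltac:(lia)). rewrite Rpow_mult_distr in HN2'.
      pose proof (sq_le_4pow N).
      assert (0 <= X ^ N * ifact N)%R by (apply Rmult_le_pos; [apply pow_le; auto | left; apply ifact_pos]).
      apply Rle_trans with (4 ^ N * X ^ N * ifact N * C1)%R.
      * replace (INR N * (INR N * (X ^ N * ifact N * C1)))%R with ((INR N * INR N) * ((X ^ N * ifact N) * C1))%R by ring.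
        replace (4 ^ N * X ^ N * ifact N * C1)%R with (4 ^ N * ((X ^ N * ifact N) * C1))%R by ring.
        apply Rmult_le_compat_r; auto. apply Rmult_le_pos; lra.
      * apply Rmult_le_reg_r with (/ C1)%R. apply Rinv_0_lt_compat; auto.
        rewrite Rmult_assoc, Rinv_r by lra. unfold Rdiv in HN2'. lra.
  - eapply Rle_trans. apply expdd_approx. fold r.
    rewrite Rabs_Ropp, (Rabs_right beta) by lra.
    fold C2. replace ((beta * r) ^ N * ifact N * exp (beta * r) * (r / LB r Y))%R with ((beta * r) ^ N * ifact N * C2)%R by (unfold C2; ring).
    apply Rmult_le_reg_r with (/ C2)%R. apply Rinv_0_lt_compat; auto.
    rewrite Rmult_assoc, Rinv_r by lra. assert (HN3' := HN3 N ltac:(lia)). unfold Rdiv in HN3'. lra.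
Qed.

Close Scope C_scope. Open Scope R_scope.
Open Scope C_scope.

Lemma approx_err t Y N beta : (Rabs t <= beta)%R ->
  (Cmod (expdd t Y - D N t Y) <= (beta * dd_radius Y) ^ N * ifact N *
      (exp (beta * dd_radius Y) * (dd_radius Y / LB (dd_radius Y) Y)))%R.
Proof.
  intros Ht. pose proof (rad_pos Y). pose proof (LB_pos Y). pose proof (ifact_pos N).
  eapply Rle_trans. apply expdd_approx.
  assert (0 <= Rabs t)%R by apply Rabs_pos.
  assert (A1 : ((Rabs t * dd_radius Y) ^ N <= (beta * dd_radius Y) ^ N)%R).
  { apply pow_incr. split. apply Rmult_le_pos; lra. apply Rmult_le_compat_r; lra. }
  assert (A2 : (exp (Rabs t * dd_radius Y) <= exp (beta * dd_radius Y))%R).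
  { apply exp_le. apply Rmult_le_compat_r; lra. }
  assert (0 < dd_radius Y / LB (dd_radius Y) Y)%R by (apply Rdiv_lt_0_compat; auto).
  assert (0 <= (Rabs t * dd_radius Y) ^ N)%R by (apply pow_le; apply Rmult_le_pos; lra).
  pose proof (exp_pos (Rabs t * dd_radius Y)).
  rewrite Rmult_assoc.
  apply Rmult_le_compat; try nra.
Qed.

Lemma unif_close beta Y0 Y1 : (0 < beta)%R ->
  forall eps, (0 < eps)%R -> exists N0, forall N, (N0 <= N)%nat ->
  forall tau, (0 <= tau <= beta)%R ->
  (Cmod (expdd (- tau) Y1 * expdd (- (beta - tau)) Y0 - D N (- (beta - tau)) Y0 * D N (- tau) Y1) <= eps)%R.
Proof.
  intros Hb eps He.
  set (r0 := dd_radius Y0). set (r1 := dd_radius Y1).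
  set (CA := (exp (beta * r1) * (r1 / LB r1 Y1))%R).
  set (CB := (exp (beta * r0) * (r0 / LB r0 Y0))%R).
  pose proof (rad_pos Y0). pose proof (rad_pos Y1). pose proof (LB_pos Y0). pose proof (LB_pos Y1).
  assert (HCA : (0 < CA)%R). { apply Rmult_lt_0_compat. apply exp_pos. apply Rdiv_lt_0_compat; auto. }
  assert (HCB : (0 < CB)%R). { apply Rmult_lt_0_compat. apply exp_pos. apply Rdiv_lt_0_compat; auto. }
  set (d := Rmin 1 (eps / (CA + CB + 1))).
  assert (Hd : (0 < d)%R). { apply Rmin_pos. lra. apply Rdiv_lt_0_compat; lra. }
  assert (Hd1 : (d <= 1)%R) by apply Rmin_l.
  assert (Hd2 : (d * (CA + CB + 1) <= eps)%R).
  { assert (d <= eps / (CA + CB + 1))%R by apply Rmin_r.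
    apply Rmult_le_compat_r with (r := (CA + CB + 1)%R) in H3. 2: lra.
    unfold Rdiv in H3. rewrite Rmult_assoc, Rinv_l in H3 by lra. lra. }
  destruct (psi_small (beta * r1) (d / CA)) as [N1 HN1]. apply Rdiv_lt_0_compat; lra.
  destruct (psi_small (beta * r0) (d / CB)) as [N2 HN2]. apply Rdiv_lt_0_compat; lra.
  exists (Nat.max N1 N2). intros N HN tau Ht.
  set (A := expdd (- tau) Y1). set (AN := D N (- tau) Y1).
  set (B := expdd (- (beta - tau)) Y0). set (BN := D N (- (beta - tau)) Y0).
  assert (EA : (Cmod (A - AN) <= d)%R).
  { eapply Rle_trans. apply (approx_err _ _ _ beta). rewrite Rabs_Ropp, Rabs_right; lra.
    fold r1. fold CA. specialize (HN1 N ltac:(lia)).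
    apply Rmult_le_reg_r with (/ CA)%R. apply Rinv_0_lt_compat; auto.
    rewrite Rmult_assoc, Rinv_r by lra. unfold Rdiv in HN1. lra. }
  assert (EB : (Cmod (B - BN) <= d)%R).
  { eapply Rle_trans. apply (approx_err _ _ _ beta). rewrite Rabs_Ropp, Rabs_right; lra.
    fold r0. fold CB. specialize (HN2 N ltac:(lia)).
    apply Rmult_le_reg_r with (/ CB)%R. apply Rinv_0_lt_compat; auto.
    rewrite Rmult_assoc, Rinv_r by lra. unfold Rdiv in HN2. lra. }
  assert (KA : (Cmod A <= CA)%R).
  { eapply Rle_trans. apply expdd_bound. fold r1. unfold CA.
    apply Rmult_le_compat_r. left; apply Rdiv_lt_0_compat; auto.
    apply exp_le. apply Rmult_le_compat_r. unfold r1; lra. rewrite Rabs_Ropp, Rabs_right; lra. }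
  assert (KB : (Cmod B <= CB)%R).
  { eapply Rle_trans. apply expdd_bound. fold r0. unfold CB.
    apply Rmult_le_compat_r. left; apply Rdiv_lt_0_compat; auto.
    apply exp_le. apply Rmult_le_compat_r. unfold r0; lra. rewrite Rabs_Ropp, Rabs_right; lra. }
  assert (KAN : (Cmod AN <= CA + d)%R).
  { replace AN with (A - (A - AN)) by ring. eapply Rle_trans. apply Cmod_triangle.
    rewrite Cmod_opp. lra. }
  replace (A * B - BN * AN) with ((A - AN) * B + AN * (B - BN)) by ring.
  eapply Rle_trans. apply Cmod_triangle. rewrite !Cmod_mult.
  pose proof (Cmod_ge_0 (A - AN)). pose proof (Cmod_ge_0 B).
  pose proof (Cmod_ge_0 AN). pose proof (Cmod_ge_0 (B - BN)).
  apply Rle_trans with (d * CB + (CA + d) * d)%R.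
  - apply Rplus_le_compat; apply Rmult_le_compat; auto.
  - nra.
Qed.

Close Scope C_scope.
Open Scope R_scope.
Theorem lemma1 (x : nat -> C) (q j : nat) (beta : R) :
  (1 <= q)%nat -> (j <= q - 1)%nat -> 0 < beta ->
  is_RInt (V := C_R_CompleteNormedModule)
    (fun tau => Cmult (expdd (- tau) (nodes x (S j) q))
                      (expdd (- (beta - tau)) (nodes x 0 j)))
    0 beta
    (Copp (expdd (- beta) (nodes x 0 q))).
Proof.
  intros Hq Hj Hb.
  rewrite (nodes_split x q j Hj Hq).
  set (Y0 := nodes x 0 j). set (Y1 := nodes x (S j) q).
  assert (H0 : Y0 <> nil) by (apply nodes_ne; lia).
  assert (H1 : Y1 <> nil) by (apply nodes_ne; lia).
  apply (approx_RInt _ (fun N tau => D N (- (beta - tau)) Y0 * D N (- tau) Y1)%C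
                       (fun N => sq N (fun n m => - FF beta Y0 Y1 n m)%C)).
  - lra.
  - intros N. apply fN_int.
  - intros eps He.
    destruct (unif_close beta Y0 Y1 Hb eps He) as [N1 HN1].
    destruct (IN_close beta Y0 Y1 Hb H0 H1 eps He) as [N2 HN2].
    exists (Nat.max N1 N2). intros N HN. split.
    + intros t Ht. apply HN1; auto. lia.
    + apply HN2. lia.
Qed.
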